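(* Let $q$ be a prime power, let $m,n\ge 1$ with $\gcd(n,q^m-1)=1$. Let $l(x)=\sum_{v=0}^{m} b_v x^{q^v}\in\mathbb{F}_q[x]$ be such that $\bar l(x)=\sum_{v=0}^m b_v x^v$ is a primitive polynomial of degree $m$ over $\mathbb{F}_q$ with $\bar l(x)\neq x-1$, and let $f(x)$ be an irreducible polynomial of degree $n$ over $\mathbb{F}_q$. Setting $b_u=0$ for $u>m$, define for $0\le i\le n-1$ $$c_i=\sum_{u=0}^{\lfloor (m+1)/n\rfloor} b_{i+nu}.$$ Suppose there is an index $i\in\{0,\ldots,n-1\}$ with $c_i\neq 0$ and $c_j=0$ for all $j\in\{0,\dots,n-1\}$, $j\ne i$. Then the polynomial $$F(x)=\frac{f\big(c_i^{-1}l(x)\big)}{f(x)}$$ of degree $n(q^m-1)$ is irreducible over $\mathbb{F}_q$.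
   Context: A primitive polynomial of degree $m$ over $\mathbb{F}_q$ is a monic irreducible polynomial of degree $m$ whose roots generate the multiplicative group $\mathbb{F}_{q^m}^*$. *)

(* Defs.v *)
From HB Require Import structures.
From mathcomp Require Import all_boot all_order all_algebra all_fingroup all_field.
Set Implicit Arguments. Unset Strict Implicit. Unset Printing Implicit Defensive.
Import GRing.Theory.
Local Open Scope ring_scope.

Definition primitive_polyq {F : finFieldType} (m : nat) (p : {poly F}) : Prop :=
  [/\ p \is monic, irreducible_poly p, size p = m.+1 &
      forall (L : fieldExtType F) (z : L),
        root (map_poly (in_alg L) p) z -> ((#|F| ^ m - 1)%N).-primitive_root z].

Definition linearized {F : finFieldType} (m : nat) (lbar : {poly F}) : {poly F} :=
  \sum_(v < m.+1) lbar`_v *: 'X^(#|F| ^ v).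

Definition cfold {F : finFieldType} (m n : nat) (lbar : {poly F}) (i : nat) : F :=
  \sum_(u < ((m + 1) %/ n).+1) lbar`_(i + n * u).

(* Main.v *)
Require Import Defs.
From HB Require Import structures.
From mathcomp Require Import all_boot all_order all_algebra all_fingroup all_field.
Import GRing.Theory.
Local Open Scope ring_scope.

Module Helpers.
Set Implicit Arguments. Unset Strict Implicit. Unset Printing Implicit Defensive.

Section Frob.
Variables (F : finFieldType) (L : fieldExtType F).

Lemma qpchar : exists2 p, (p \in [pchar L]) & exists e, #|F| = (p ^ e.+1)%N.
Proof.
have [p pp pcharFp] := finPcharP F.
exists p; first by rewrite (pchar_lalg L).
have := card_pprimeChar pcharFp; case: (logn _ _) => [|e] H; last by exists e.
by have := finNzRing_gt1 F; rewrite H.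
Qed.

Definition frobk (k : nat) (x : L) := x ^+ (#|F| ^ k).

Lemma frobk_zmod k : zmod_morphism (frobk k).
Proof.
rewrite /frobk => x y.
have [p pcharFp [e ->]] := qpchar.
rewrite -expnM; elim: (e.+1 * k)%N => [|j IHj]; first by rewrite !expn0 !expr1.
by rewrite expnSr !exprM IHj -!(pFrobenius_autE pcharFp) rmorphB.
Qed.

Lemma frobk_monoid k : monoid_morphism (frobk k).
Proof. by rewrite /frobk; split=> [|x y]; rewrite ?exprMn ?expr1n. Qed.

HB.instance Definition _ k := GRing.isZmodMorphism.Build L L (frobk k) (frobk_zmod k).
HB.instance Definition _ k := GRing.isMonoidMorphism.Build L L (frobk k) (frobk_monoid k).

Lemma frobk_alg k (a : F) : frobk k (a%:A) = a%:A.
Proof.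
rewrite /frobk -in_algE -rmorphXn; congr (in_alg L _).
elim: k => [|k IH]; first by rewrite expr1.
by rewrite expnSr exprM IH expf_card.
Qed.

Lemma frobk_map k (p : {poly F}) : map_poly (frobk k) (map_poly (in_alg L) p) = map_poly (in_alg L) p.
Proof.
by rewrite -map_poly_comp; apply: eq_map_poly => a /=; rewrite frobk_alg.
Qed.

Lemma frobk_horner k (p : {poly F}) (x : L) :
  (map_poly (in_alg L) p).[frobk k x] = frobk k (map_poly (in_alg L) p).[x].
Proof. by rewrite -horner_map frobk_map. Qed.

Lemma frobkD j k (x : L) : frobk (j + k) x = frobk k (frobk j x).
Proof. by rewrite /frobk expnD exprM. Qed.

Lemma frobk_inj k : injective (frobk k).
Proof. exact: fmorph_inj. Qed.

Lemma frobk_eq0 k (x : L) : (frobk k x == 0) = (x == 0).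
Proof. by rewrite /frobk expf_eq0 expn_gt0 (ltnW (finNzRing_gt1 F)). Qed.

End Frob.

Section Lin.
Variables (F : finFieldType) (L : fieldExtType F).
Implicit Types (p r u : {poly F}) (y z : L) (a : F).

Definition lin (p : {poly F}) (N : nat) (y : L) :=
  \sum_(v < N) (p`_v)%:A * frobk v y.


Lemma lin_ext p N y : (size p <= N)%N -> lin p N y = lin p (size p) y.
Proof.
move=> le; rewrite /lin -(subnKC le) big_split_ord /=.
rewrite [X in _ + X]big1 ?addr0 // => v _.
by rewrite nth_default ?scale0r ?mul0r // leq_addr.
Qed.

Lemma lin_frob p N k y : frobk k (lin p N y) = lin p N (frobk k y).
Proof.
rewrite /lin rmorph_sum; apply: eq_bigr => v _.
by rewrite rmorphM /= frobk_alg -!frobkD addnC.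
Qed.

Lemma lin_addy p N y z : lin p N (y + z) = lin p N y + lin p N z.
Proof. by rewrite /lin -big_split; apply: eq_bigr => v _; rewrite rmorphD mulrDr. Qed.

Lemma lin_subrX p N y z : lin p N (y - z) = lin p N y - lin p N z.
Proof. by rewrite /lin -sumrB; apply: eq_bigr => v _; rewrite rmorphB mulrBr. Qed.

Lemma lin_addp p r N y : lin (p + r) N y = lin p N y + lin r N y.
Proof. by rewrite /lin -big_split; apply: eq_bigr => v _; rewrite coefD scalerDl mulrDl. Qed.

Lemma lin_scalep a p N y : lin (a *: p) N y = a%:A * lin p N y.
Proof.
rewrite /lin mulr_sumr; apply: eq_bigr => v _.
by rewrite coefZ -scalerA mulrA mulr_algl.
Qed.

Lemma lin_mulX p N y : lin (p * 'X) N.+1 y = frobk 1 (lin p N y).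
Proof.
rewrite lin_frob /lin big_ord_recl coefMX eqxx scale0r mul0r add0r.
by apply: eq_bigr => v _; rewrite coefMX /= add0n -frobkD /bump leq0n add1n.
Qed.

Definition linZ p (y : L) := forall N, (size p <= N)%N -> lin p N y = 0.

Lemma linZ_mulX p y : linZ p y -> linZ (p * 'X) y.
Proof.
move=> Zp [|N] le; first by rewrite /lin big_ord0.
have [->|nzp] := eqVneq p 0; first by rewrite mul0r /lin big1 // => v _; rewrite coef0 scale0r mul0r.
rewrite lin_mulX Zp ?rmorph0 //; by move: le; rewrite size_mulX.
Qed.

Lemma linZ_add p r y : linZ p y -> linZ r y -> linZ (p + r) y.
Proof.
move=> Zp Zr N le.
set M := maxn N (maxn (size p) (size r)).
have leM : (N <= M)%N by rewrite leq_maxl.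
rewrite (lin_ext _ le) -(lin_ext _ (leq_trans le leM)) lin_addp.
rewrite Zp ?Zr ?addr0 // /M; apply: leq_trans (leq_maxr _ _); rewrite ?leq_maxl ?leq_maxr //.
Qed.

Lemma linZ_scale a p y : linZ p y -> linZ (a *: p) y.
Proof.
move=> Zp N le; have [->|nza] := eqVneq a 0.
  by rewrite scale0r /lin big1 // => v _; rewrite coef0 scale0r mul0r.
by rewrite lin_scalep Zp ?mulr0 // -(size_scale p nza).
Qed.

Lemma linZ_mul u p y : linZ p y -> linZ (u * p) y.
Proof.
move=> Zp; elim/poly_ind: u => [|u c IH].
  by rewrite mul0r => N _; rewrite /lin big1 // => v _; rewrite coef0 scale0r mul0r.
rewrite mulrDl mulrAC mul_polyC.
by apply: linZ_add; [apply: linZ_mulX | apply: linZ_scale].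
Qed.

Lemma lin0p N y : lin 0 N y = 0.
Proof. by rewrite /lin big1 // => v _; rewrite coef0 scale0r mul0r. Qed.

Lemma lin_sum k (P : nat -> {poly F}) N y :
  lin (\sum_(t < k) P t) N y = \sum_(t < k) lin (P t) N y.
Proof.
elim: k => [|k IH]; first by rewrite !big_ord0 lin0p.
by rewrite !big_ord_recr /= lin_addp IH.
Qed.

Lemma lin_Xn k N y : (k < N)%N -> lin 'X^k N y = frobk k y.
Proof.
move=> lt; rewrite /lin (bigD1 (Ordinal lt)) //= big1 ?addr0.
  by rewrite coefXn eqxx scale1r mul1r.
by move=> v /=; rewrite -val_eqE /= coefXn => /negbTE ->; rewrite scale0r mul0r.
Qed.

Lemma lin_C a y : lin a%:P 1 y = a%:A * y.
Proof. by rewrite /lin big_ord1 coefC /= /frobk expn0 expr1. Qed.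

End Lin.

Lemma linearizedE (F : finFieldType) (L : fieldExtType F) m (lb : {poly F}) (y : L) :
  (map_poly (in_alg L) (linearized m lb)).[y] = lin lb m.+1 y.
Proof.
rewrite /linearized rmorph_sum horner_sum; apply: eq_bigr => v _.
by rewrite -mul_polyC rmorphM /= map_polyC map_polyXn hornerCM hornerXn.
Qed.

Section Red.
Variables (F : finFieldType) (L : fieldExtType F).

Lemma frob_period n (y : L) u : frobk n y = y -> frobk (n * u) y = y.
Proof.
move=> Hy; elim: u => [|u IH]; first by rewrite muln0 /frobk expn0 expr1.
by rewrite mulnS frobkD Hy.
Qed.

Lemma frobkC j k (y : L) : frobk j (frobk k y) = frobk k (frobk j y).
Proof. by rewrite -!frobkD addnC. Qed.

Lemma sum_reindex (G : nat -> L) n K :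
  \sum_(u < K) \sum_(j < n) G (j + n * u)%N = \sum_(w < n * K) G w.
Proof.
elim: K => [|K IH]; first by rewrite muln0 !big_ord0.
rewrite big_ord_recr /= IH mulnS addnC -!(big_mkord xpredT).
rewrite (big_cat_nat _ (leq_addr n (n * K))) //=; congr (_ + _).
rewrite -{2}[(n*K)%N]add0n big_addn addKn big_mkord.
by apply: eq_bigr => j _.
Qed.

Lemma lin_reduce m n (lb : {poly F}) (y : L) : (0 < n)%N -> size lb = m.+1 ->
  frobk n y = y ->
  lin lb m.+1 y = \sum_(j < n) (cfold m n lb j)%:A * frobk j y.
Proof.
move=> n0 szl Hy.
have -> : \sum_(j < n) (cfold m n lb j)%:A * frobk j y =
    \sum_(j < n) \sum_(u < ((m + 1) %/ n).+1) (lb`_(j + n * u))%:A * frobk (j + n * u) y.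
  apply: eq_bigr => j _; rewrite /cfold scaler_suml mulr_suml; apply: eq_bigr => u _.
  by rewrite frobkD frobkC frob_period.
rewrite exchange_big /= (sum_reindex (fun w => (lb`_w)%:A * frobk w y)).
rewrite -/(lin lb _ y) -szl lin_ext // szl mulnC.
by apply: ltn_trans (ltn_ceil (m + 1) n0); rewrite addn1.
Qed.

End Red.

Section Gen.
Variables (F : finFieldType).

Lemma irr_coprime (p g : {poly F}) : irreducible_poly p -> ~~ (p %| g) -> coprimep p g.
Proof.
move=> [_ Hp] ndvd; rewrite coprimep_def; apply/negPn/negP => H.
have := Hp _ H (dvdp_gcdl p g) => /eqp_dvdl Heq.
by move: ndvd; rewrite -Heq dvdp_gcdr.
Qed.

Lemma fermat (L : fieldExtType F) (x : L) : frobk (\dim <<1; x>>) x = x.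
Proof.
apply/eqP; have := Fermat's_little_theorem <<1; x>>%AS x.
by rewrite /= memv_adjoin => /esym.
Qed.

Lemma minPoly_irr_map (L : fieldExtType F) (x : L) (p : {poly F}) :
  irreducible_poly p -> root (map_poly (in_alg L) p) x ->
  \dim <<1; x>> = (size p).-1 /\ exists2 r, minPoly 1 x = map_poly (in_alg L) r & r %= p.
Proof.
move=> [p1 Hp] rx.
have /polyOver1P[r Dr] := minPolyOver 1%AS x.
have dv : r %| p.
  by rewrite -(dvdp_map (in_alg L)) -Dr; apply: minPoly_dvdp => //; apply: alg_polyOver.
have szr : size r = (adjoin_degree 1 x).+1.
  by rewrite -(size_map_poly (in_alg L)) -Dr size_minPoly.
have Er : r %= p by apply: Hp => //; rewrite szr.
split; last by exists r.
by rewrite dim_Fadjoin dimv1 muln1 -(eqp_size Er) szr.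
Qed.

Lemma separable_irr (p : {poly F}) : irreducible_poly p -> separable_poly p.
Proof.
move=> Hp; have [L _ [z rz _]] := irredp_FAdjoin Hp.
have [_ [r Dr Er]] := minPoly_irr_map Hp rz.
rewrite -(eqp_separable Er) -(separable_map (in_alg L)) -Dr.
pose sL := FinSplittingFieldType F L.
have := finField_galois (subvf (1%AS : {subfield sL})).
case/and3P => _ /separableP sep _.
exact: (sep z (memvf z)).
Qed.

End Gen.

Section Main.
Variables (F : finFieldType) (m n : nat) (lbar f : {poly F}) (i : nat).
Hypotheses (Hm : (0 < m)%N) (Hn : (0 < n)%N) (Hcop : coprime n (#|F| ^ m - 1))
  (Hprim : primitive_polyq m lbar) (Hf : irreducible_poly f) (Hszf : size f = n.+1)
  (Hi : (i < n)%N) (Hc : cfold m n lbar i != 0)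
  (Hcj : forall j : nat, (j < n)%N -> j != i -> cfold m n lbar j = 0).

Local Notation q := #|F|.
Local Notation c := (cfold m n lbar i).
Local Notation Lp := (c^-1 *: linearized m lbar).
Local Notation G := (f \Po Lp).

Lemma q_gt1 : (1 < q)%N. Proof. exact: finNzRing_gt1. Qed.

Lemma szl : size lbar = m.+1. Proof. by case: Hprim. Qed.
Lemma lbar_m : lbar`_m = 1.
Proof. by case: Hprim => /monicP; rewrite lead_coefE => + _ szl' => <-; rewrite szl'. Qed.

Lemma qm1_gt0 : (0 < q ^ m - 1)%N.
Proof. by rewrite subn_gt0 -(exp1n m) ltn_exp2r // q_gt1. Qed.

Lemma lbar_0 : lbar`_0 != 0.
Proof.
case: Hprim => _ Hirr _ Hpr; have [L _ _] := irredp_FAdjoin Hirr.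
apply/negP => /eqP b0.
have r0 : root (map_poly (in_alg L) lbar) 0 by rewrite /root horner_coef0 coef_map /= b0 scale0r.
have := prim_expr_order (Hpr L 0 r0); rewrite expr0n.
by case: (q ^ m - 1)%N qm1_gt0 => // k _ /eqP; rewrite eq_sym oner_eq0.
Qed.

Lemma LpE (L : fieldExtType F) (y : L) : frobk n y = y ->
  (map_poly (in_alg L) Lp).[y] = frobk i y.
Proof.
move=> Hy; rewrite map_polyZ hornerZ linearizedE (lin_reduce Hn szl Hy).
rewrite (bigD1 (Ordinal Hi)) //= big1 ?addr0 => [|j /= nji].
  by rewrite !mulr_algl scalerA mulVf // scale1r.
by rewrite Hcj // scale0r mul0r.
Qed.

Lemma size_lin_part k : leq (size (\sum_(v < k) lbar`_v *: 'X^(q ^ v))) (q ^ k)%N.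
Proof.
elim: k => [|k IH]; first by rewrite big_ord0 size_poly0.
rewrite big_ord_recr /=; apply: leq_trans (size_polyD _ _) _.
rewrite geq_max; apply/andP; split.
  by apply: leq_trans IH _; rewrite leq_exp2l ?q_gt1 // leqnSn.
apply: leq_trans (size_scale_leq _ _) _; rewrite size_polyXn expnS.
have : (1 < q)%N := q_gt1; have : (0 < q ^ k)%N by rewrite expn_gt0 (ltnW q_gt1).
case: (q ^ k)%N => // a _; case: q => // [[|b]] // _.
by rewrite mulSn -[a.+2]addn1 leq_add2l muln_gt0.
Qed.

Lemma size_lin : size (linearized m lbar) = (q ^ m).+1.
Proof.
rewrite /linearized big_ord_recr /= lbar_m scale1r addrC size_polyDl ?size_polyXn //.
by rewrite ?size_polyXn ltnS size_lin_part.
Qed.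

Lemma size_Lp : size Lp = (q ^ m).+1.
Proof. by rewrite size_scale ?invr_eq0 // size_lin. Qed.

Lemma size_G : size G = (n * q ^ m).+1.
Proof.
have := size_comp_poly f Lp; rewrite Hszf size_Lp /=.
have pos : (0 < n * q ^ m)%N by rewrite muln_gt0 Hn expn_gt0 (ltnW q_gt1).
by case: (size G) => [|k] /= H; [rewrite -H in pos | rewrite H].
Qed.

Lemma f_dvd_G : f %| G.
Proof.
apply/negPn/negP => nd; have cop := irr_coprime Hf nd.
have [L _ [a ra _]] := irredp_FAdjoin Hf.
have [dima _] := minPoly_irr_map Hf ra.
have Ha : frobk n a = a by rewrite -{1}[n]/(n.+1.-1) -Hszf -dima fermat.
have := coprimep_root _ ra => /(_ (map_poly (in_alg L) G)); rewrite coprimep_map => /(_ cop).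
by rewrite map_comp_poly horner_comp LpE // frobk_horner (rootP ra) rmorph0 eqxx.
Qed.

Lemma char_q : (q%:R : F) = 0.
Proof.
have [p pp pcharFp] := finPcharP F.
have := card_pprimeChar pcharFp; case: (logn _ _) => [|e] H.
  by have := finNzRing_gt1 F; rewrite H.
by rewrite H natrX (pcharf0 pcharFp) expr0n.
Qed.

Lemma deriv_Lp : Lp^`() = (c^-1 * lbar`_0)%:P.
Proof.
rewrite derivZ /linearized raddf_sum big_ord_recl big1 ?addr0 => [|v _] /=.
  by rewrite expn0 expr1 derivZ derivX alg_polyC -mul_polyC -polyCM.
by rewrite derivZ derivXn -scaler_nat expnS natrM char_q mul0r scale0r scaler0.
Qed.

Lemma size_h k : leq (size (\sum_(t < k) 'X^(n * t) : {poly F})) (n * k)%N.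
Proof.
elim: k => [|k IH]; first by rewrite big_ord0 size_poly0.
rewrite big_ord_recr /=; apply: leq_trans (size_polyD _ _) _.
rewrite geq_max size_polyXn mulnS; apply/andP; split.
  by apply: leq_trans IH _; rewrite leq_addl.
by rewrite -{1}[(n * k)%N]add0n ltn_add2r.
Qed.

Lemma tele k : (\sum_(t < k) 'X^(n * t)) * ('X^n - 1) = 'X^(n * k) - 1 :> {poly F}.
Proof.
elim: k => [|k IH]; first by rewrite big_ord0 mul0r muln0 expr0 subrr.
rewrite big_ord_recr /= mulrDl IH mulrBr mulr1 -exprD mulnS addnC.
by rewrite addrC addrA subrK.
Qed.

Lemma core (L : fieldExtType F) (b : L) :
  root (map_poly (in_alg L) (G %/ f)) b -> (n * (q ^ m - 1) <= \dim <<1; b>>)%N.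
Proof.
move=> rb; set d := \dim <<1; b>>.
have DG : G = (G %/ f) * f by rewrite divpK // f_dvd_G.
set g := (map_poly (in_alg L) Lp).[b].
have rg : root (map_poly (in_alg L) f) g.
  have : root (map_poly (in_alg L) G) b by rewrite DG rmorphM rootM rb.
  by rewrite map_comp_poly /root horner_comp.
have [dimg _] := minPoly_irr_map Hf rg.
have Hg : frobk n g = g by rewrite -{1}[n]/(n.+1.-1) -Hszf -dimg fermat.
have gin : g \in <<1; b>>%VS by apply: mempx_Fadjoin; apply: alg_polyOver.
have ndvd : (n %| d)%N.
  have := field_dimS (_ : (<<1; g>> <= <<1; b>>)%VS).
  by rewrite dimg Hszf /=; apply; rewrite sub_adjoin1v.
have Hb : frobk d b = b := fermat b.
set e := frobk n b - b.
have linb : lin lbar m.+1 b = c%:A * g.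
  by rewrite /g map_polyZ hornerZ linearizedE !mulr_algl scalerA divff // scale1r.
have lineZ : linZ lbar e.
  move=> N le; rewrite lin_ext // szl /e lin_subrX -lin_frob linb rmorphM /=.
  by rewrite frobk_alg Hg subrr.
have e0 : e != 0.
  apply/negP; rewrite /e subr_eq0 => /eqP Hbn.
  have gb : g = frobk i b by rewrite /g LpE.
  have fb : root (map_poly (in_alg L) f) b.
    by move: rg; rewrite gb /root frobk_horner frobk_eq0.
  have dG : (map_poly (in_alg L) G^`()).[b] = 0.
    rewrite {1}DG derivM rmorphD !rmorphM /= hornerD !hornerM (rootP fb) (rootP rb).
    by rewrite mulr0 mul0r addr0.
  move: dG; rewrite deriv_comp deriv_Lp rmorphM /= map_polyC /= hornerM hornerC.
  rewrite map_comp_poly horner_comp -/g gb frobk_horner => /eqP.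
  rewrite mulf_eq0 frobk_eq0 scaler_eq0 oner_eq0 orbF mulf_eq0 invr_eq0 (negbTE Hc) (negbTE lbar_0) orbF.
  have := separable_irr Hf; rewrite unlock => cop.
  have := coprimep_root _ fb => /(_ (map_poly (in_alg L) f^`())).
  by rewrite (coprimep_map (in_alg L)) => /(_ cop) /negbTE ->.
have S j : frobk (n * j) b = b + \sum_(t < j) frobk (n * t) e.
  elim: j => [|j IH]; first by rewrite muln0 /frobk expn0 expr1 big_ord0 addr0.
  rewrite big_ord_recr /= addrA -IH mulnS frobkD.
  have -> : frobk n b = b + e by rewrite /e addrC subrK.
  by rewrite rmorphD.
set k := (d %/ n)%N.
have Dd : d = (n * k)%N by rewrite mulnC divnK.
have sum0 : \sum_(t < k) frobk (n * t) e = 0.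
  by apply: (@addrI _ b); rewrite -S -Dd Hb addr0.
set h := \sum_(t < k) 'X^(n * t) : {poly F}.
have linh : linZ h e.
  move=> N le; rewrite lin_ext // /h -(lin_ext _ (size_h k)) (lin_sum k (fun t => 'X^(n * t))).
  rewrite -[RHS]sum0; apply: eq_bigr => t _; apply: lin_Xn.
  by rewrite ltn_mul2l Hn ltn_ord.
have dvh : lbar %| h.
  apply/negPn/negP => nd; have := irr_coprime (let: And4 _ H _ _ := Hprim in H) nd.
  case/Bezout_coprimepP => [[u1 u2] /= /eqpP [[c1 c2] /= /andP [c10 c20] E]].
  have Z : linZ (u1 * lbar + u2 * h) e by apply: linZ_add; apply: linZ_mul.
  have := linZ_scale (a:=c1) Z (N:=1); rewrite E alg_polyC lin_C size_polyC c20 => /(_ isT) /eqP.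
  by rewrite mulf_eq0 scaler_eq0 oner_eq0 (negbTE c20) (negbTE e0).
have dvX : lbar %| 'X^(n * k) - 1 by rewrite -tele dvdp_mulr.
case: Hprim => _ Hirr _ Hpr; have [L' _ [z rz _]] := irredp_FAdjoin Hirr.
have rz2 : root (map_poly (in_alg L') ('X^(n * k) - 1)) z.
  by apply: root_dvdp rz; rewrite dvdp_map.
have zk : z ^+ (n * k) == 1.
  by move: rz2; rewrite rmorphB rmorphXn /= map_polyX rmorph1 /root hornerD hornerN hornerXn hornerC subr_eq0.
have k0 : (0 < k)%N by move: (adim_gt0 <<1; b>>%VS); rewrite -/d Dd muln_gt0 => /andP[].
have dk : (q ^ m - 1 %| k)%N.
  by rewrite -(Gauss_dvdr _ (_ : coprime (q ^ m - 1) n)) ?(prim_order_dvd (Hpr L' z rz)) // coprime_sym.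
by rewrite Dd leq_mul2l dvdn_leq ?orbT.
Qed.

Lemma final : size (G %/ f) = (n * (q ^ m - 1)).+1 /\ irreducible_poly (G %/ f).
Proof.
have szFx : size (G %/ f) = (n * (q ^ m - 1)).+1.
  rewrite size_divp ?irredp_neq0 // size_G Hszf /= mulnBr muln1 subSn //.
  by rewrite leq_pmulr // expn_gt0 (ltnW q_gt1).
split=> //; split; first by rewrite szFx ltnS muln_gt0 Hn qm1_gt0.
move=> g szg dvg.
have Fx0 : G %/ f != 0 by rewrite -size_poly_eq0 szFx.
have g0 : g != 0.
  by apply: contraNneq Fx0 => g0; move: dvg; rewrite g0 dvd0p.
have [L [rs Ers _]] := FinSplittingFieldFor Fx0.
have : map_poly (in_alg L) g %| \prod_(z <- rs) ('X - z%:P).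
  by rewrite -(eqp_dvdr _ Ers) dvdp_map.
case/dvdp_prod_XsubC => msk Eg.
have [z rz] : exists z, root (map_poly (in_alg L) g) z.
  move: Eg; case: (mask msk rs) => [|z s] Eg2.
    by move: szg; rewrite -(size_map_poly (in_alg L)) (eqp_size Eg2) big_nil size_poly1.
  by exists z; rewrite (eqp_root Eg2) root_prod_XsubC mem_head.
have rFx : root (map_poly (in_alg L) (G %/ f)) z.
  by apply: root_dvdp rz; rewrite dvdp_map.
have le1 := core rFx.
have dm : minPoly 1 z %| map_poly (in_alg L) g.
  by apply: minPoly_dvdp => //; apply: alg_polyOver.
have := dvdp_leq _ dm; rewrite size_minPoly size_map_poly map_poly_eq0 => /(_ g0).
move: le1; rewrite dim_Fadjoin dimv1 muln1 => le1 le2.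
rewrite -dvdp_size_eqp // eqn_leq dvdp_leq //= szFx.
by apply: leq_trans le2; rewrite ltnS.
Qed.

End Main.

End Helpers.

Theorem mainTheorem8 (F : finFieldType) (m n : nat) (lbar f : {poly F}) (i : nat) :
  (0 < m)%N -> (0 < n)%N ->
  coprime n (#|F| ^ m - 1) ->
  primitive_polyq m lbar -> lbar != 'X - 1 ->
  irreducible_poly f -> size f = n.+1 ->
  (i < n)%N -> cfold m n lbar i != 0 ->
  (forall j : nat, (j < n)%N -> j != i -> cfold m n lbar j = 0) ->
  let Fx := (f \Po ((cfold m n lbar i)^-1 *: linearized m lbar)) %/ f in
  size Fx = (n * (#|F| ^ m - 1)).+1 /\ irreducible_poly Fx.
Proof.
move=> Hm Hn Hcop Hprim _ Hf Hszf Hi Hc Hcj Fx.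
exact: (Helpers.final Hm Hn Hcop Hprim Hf Hszf Hi Hc Hcj).
Qed.
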